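(* (1) If $R$ is a Bézout ring (every finitely generated ideal is principal), then every $R$-module satisfies the dual of Property $\mathcal{A}$. (2) If $R$ has Krull dimension zero, then every $R$-module satisfies the dual of Property $\mathcal{A}$. (3) Every finitely generated $R$-module satisfies the dual of Property $\mathcal{A}$. (4) If $M$ is an Artinian $R$-module, then for every ideal $I$ of $R$ (not necessarily finitely generated) with $I\subseteq W_R(M)$ we have $IM\neq M$; in particular $M$ satisfies the dual of Property $\mathcal{A}$.
   Context: All rings are commutative with identity. For an $R$-module $M$, $W_R(M)=\{r\in R : rM\neq M\}$. An $R$-module $M$ satisfies the dual of Property $\mathcal{A}$ if for every finitely generated ideal $I$ of $R$ with $I\subseteq W_R(M)$ we have $IM\neq M$. *)

(* Defs.v *)
From mathcomp Require Import all_boot all_algebra.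
Set Implicit Arguments. Unset Strict Implicit. Unset Printing Implicit Defensive.
Import GRing.Theory.
Local Open Scope ring_scope.

Definition is_ideal (R : comPzRingType) (I : R -> Prop) : Prop :=
  [/\ I 0, (forall x y, I x -> I y -> I (x + y)) & (forall r x, I x -> I (r * x))].

Definition fg_ideal (R : comPzRingType) (I : R -> Prop) : Prop :=
  exists s : seq R, forall x,
    I x <-> exists c : 'I_(size s) -> R, x = \sum_(i < size s) c i * s`_i.

Definition principal_ideal (R : comPzRingType) (I : R -> Prop) : Prop :=
  exists a : R, forall x, I x <-> exists c : R, x = c * a.

Definition bezout_ring (R : comPzRingType) : Prop :=
  forall I : R -> Prop, fg_ideal I -> principal_ideal I.

Definition prime_ideal (R : comPzRingType) (P : R -> Prop) : Prop :=
  [/\ is_ideal P, ~ P 1 & forall a b, P (a * b) -> P a \/ P b].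

Definition maximal_ideal (R : comPzRingType) (P : R -> Prop) : Prop :=
  [/\ is_ideal P, ~ P 1 &
     forall J : R -> Prop, is_ideal J -> (forall x, P x -> J x) ->
       (forall x, J x -> P x) \/ J 1].

Definition krull_dim_zero (R : comPzRingType) : Prop :=
  forall P : R -> Prop, prime_ideal P -> maximal_ideal P.

Definition rM_ne_M (R : comPzRingType) (M : lmodType R) (r : R) : Prop :=
  exists m : M, forall m' : M, m <> r *: m'.

Definition W (R : comPzRingType) (M : lmodType R) : R -> Prop :=
  fun r => @rM_ne_M R M r.

Definition IM (R : comPzRingType) (M : lmodType R) (I : R -> Prop) : M -> Prop :=
  fun m => exists (n : nat) (a : 'I_n -> R) (x : 'I_n -> M),
    (forall k, I (a k)) /\ m = \sum_(k < n) a k *: x k.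

Definition IM_ne_M (R : comPzRingType) (M : lmodType R) (I : R -> Prop) : Prop :=
  exists m : M, ~ @IM R M I m.

Definition dual_property_A (R : comPzRingType) (M : lmodType R) : Prop :=
  forall I : R -> Prop, fg_ideal I ->
    (forall r, I r -> @W R M r) -> @IM_ne_M R M I.

Definition fg_module (R : comPzRingType) (M : lmodType R) : Prop :=
  exists s : seq M, forall m : M,
    exists c : 'I_(size s) -> R, m = \sum_(i < size s) c i *: s`_i.

Definition is_submodule (R : comPzRingType) (M : lmodType R) (N : M -> Prop) : Prop :=
  [/\ N 0, (forall x y, N x -> N y -> N (x + y)) & (forall r x, N x -> N (r *: x))].

Definition artinian_module (R : comPzRingType) (M : lmodType R) : Prop :=
  forall N : nat -> M -> Prop,
    (forall n, is_submodule (N n)) ->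
    (forall n x, N n.+1 x -> N n x) ->
    exists k, forall n, (k <= n)%N -> forall x, N n x <-> N k x.

(* Main.v *)
Require Import Defs.
From mathcomp Require Import all_boot all_algebra ring zify.
From mathcomp Require classical_sets.
From Stdlib Require Import Classical ClassicalEpsilon Lia.
Set Implicit Arguments. Unset Strict Implicit. Unset Printing Implicit Defensive.
Import GRing.Theory.
Local Open Scope ring_scope.

Lemma idl0 {R : comPzRingType} (I : R -> Prop) : is_ideal I -> I 0.
Proof. by case. Qed.
Lemma idlD {R : comPzRingType} (I : R -> Prop) x y : is_ideal I -> I x -> I y -> I (x + y).
Proof. by case=> _ H _; apply: H. Qed.
Lemma idlMl {R : comPzRingType} (I : R -> Prop) r x : is_ideal I -> I x -> I (r * x).
Proof. by case=> _ _ H; apply: H. Qed.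
Lemma idlMr {R : comPzRingType} (I : R -> Prop) r x : is_ideal I -> I x -> I (x * r).
Proof. by move=> HI Hx; rewrite mulrC; apply: idlMl. Qed.
Lemma idlN {R : comPzRingType} (I : R -> Prop) x : is_ideal I -> I x -> I (- x).
Proof. by move=> HI Hx; rewrite -mulN1r; apply: idlMl. Qed.
Lemma idlB {R : comPzRingType} (I : R -> Prop) x y : is_ideal I -> I x -> I y -> I (x - y).
Proof. by move=> HI Hx Hy; apply: (idlD HI) => //; apply: (idlN HI). Qed.
Lemma idl_sum {R : comPzRingType} (I : R -> Prop) n (F : 'I_n -> R) :
  is_ideal I -> (forall i, I (F i)) -> I (\sum_(i < n) F i).
Proof.
move=> HI HF; elim/big_ind: _ => //; first exact: (idl0 HI).
by move=> x y; apply: (idlD HI).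
Qed.

Lemma nak {R : comPzRingType} {M : lmodType R} (I : R -> Prop) : is_ideal I ->
  forall k (t : nat -> M) (A : nat -> nat -> R), (forall i j, I (A i j)) ->
  (forall i, (i < k)%N -> t i = \sum_(j < k) A i j *: t j) ->
  exists a, I a /\ forall i, (i < k)%N -> a *: t i = t i.
Proof.
move=> HI; elim=> [|k IH] t A HA Ht.
  by exists 0; split => //; exact: (idl0 HI).
pose al := A k k; pose u := 1 - al.
have Ek : u *: t k = \sum_(j < k) A k j *: t j.
  rewrite /u scalerBl scale1r {1}(Ht k (ltnSn k)) big_ord_recr /=.
  by rewrite addrK.
have E1 : forall i, (i < k)%N ->
    u *: t i = \sum_(j < k) (u * A i j + A i k * A k j) *: t j.
  move=> i Hi; rewrite {1}(Ht i (ltnW Hi)) big_ord_recr /= scalerDr.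
  rewrite scalerA mulrC -scalerA Ek scaler_sumr scaler_sumr -big_split /=.
  by apply: eq_bigr => j _; rewrite !scalerA scalerDl.
pose A' i j := u * A i j + A i k * A k j + (if i == j then al else 0).
have HA' : forall i j, I (A' i j).
  move=> i j; rewrite /A'; apply: (idlD HI).
    apply: (idlD HI); [apply: (idlMl _ HI) | apply: (idlMr _ HI)] => //.
  case: (i == j). exact: HA. exact: (idl0 HI).
have Htau : forall i, (i < k)%N -> u *: t i = \sum_(j < k) A' i j *: (u *: t j).
  move=> i Hi; rewrite /A'.
  under eq_bigr do rewrite scalerDl.
  rewrite big_split /=.
  have -> : \sum_(j < k) (if i == j then al else 0) *: (u *: t j) = al *: (u *: t i).
    rewrite (bigD1 (Ordinal Hi)) //= eqxx big1 ?addr0 // => j Hj.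
    case: eqP => [Eij|]; last by rewrite scale0r.
    by move: Hj; rewrite -val_eqE /= Eij eqxx.
  have -> : \sum_(j < k) (u * A i j + A i k * A k j) *: (u *: t j)
      = u *: (u *: t i).
    rewrite (E1 i Hi) scaler_sumr; apply: eq_bigr => j _.
    by rewrite !scalerA mulrC.
  by rewrite -scalerDl /u subrK scale1r.
have [b [Hb Hbt]] := IH (fun j => u *: t j) A' HA' Htau.
exists (1 - (1 - b) * (u * u)); split.
  have -> : 1 - (1 - b) * (u * u) = b + (1 - b) * (al * (2%:R - al)).
    by rewrite /u; ring.
  apply: (idlD HI Hb); apply: (idlMl _ HI); apply: (idlMr _ HI); exact: HA.
move=> i; rewrite ltnS leq_eqVlt => /orP [/eqP ->|Hi].
  rewrite scalerBl scale1r -!scalerA Ek !scaler_sumr big1 ?subr0 // => j _.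
  rewrite [u *: (A k j *: _)]scalerA mulrC -scalerA [(1-b) *: (A k j *: _)]scalerA.
  by rewrite mulrC -scalerA scalerBl scale1r Hbt // subrr scaler0.
rewrite scalerBl scale1r -!scalerA [(1 - b) *: _]scalerA mulrC -scalerA.
by rewrite [(1 - b) *: _]scalerBl scale1r Hbt // subrr scaler0 subr0.
Qed.

Lemma fg_ideal_is {R : comPzRingType} (I : R -> Prop) : fg_ideal I -> is_ideal I.
Proof.
move=> [s Hs]; split.
- apply/Hs; exists (fun _ => 0); by rewrite big1 // => i _; rewrite mul0r.
- move=> x y /Hs [c1 ->] /Hs [c2 ->]; apply/Hs; exists (fun i => c1 i + c2 i).
  by rewrite -big_split /=; apply: eq_bigr => i _; rewrite mulrDl.
- move=> r x /Hs [c ->]; apply/Hs; exists (fun i => r * c i).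
  by rewrite mulr_sumr; apply: eq_bigr => i _; rewrite mulrA.
Qed.

Lemma part1 (R : comPzRingType) :
  bezout_ring R -> forall M : lmodType R, dual_property_A M.
Proof.
move=> HB M I HI HW; have [a Ha] := HB I HI.
have [m0 Hm0] := HW a (proj2 (Ha a) (ex_intro _ 1 (esym (mul1r a)))).
exists m0 => [[n [b [x [Hb E]]]]].
apply: (Hm0 (\sum_(k < n) (proj1_sig (constructive_indefinite_description _ (proj1 (Ha _) (Hb k)))) *: x k)).
rewrite E scaler_sumr; apply: eq_bigr => k _.
case: (constructive_indefinite_description _ _) => c /= ->; by rewrite scalerA mulrC.
Qed.

Inductive ispan {R : comPzRingType} {M : lmodType R} (I : R -> Prop) (L : M -> Prop) : M -> Prop :=
| ispan0 : ispan I L 0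
| ispan_gen a y : I a -> L y -> ispan I L (a *: y)
| ispan_add x y : ispan I L x -> ispan I L y -> ispan I L (x + y).

Lemma IM_span {R : comPzRingType} {M : lmodType R} (I : R -> Prop) (m : M) :
  IM I m -> ispan I (fun _ => True) m.
Proof.
move=> [n [a [x [Ha ->]]]]; elim: n a x Ha => [|n IH] a x Ha.
  by rewrite big_ord0; constructor.
rewrite big_ord_recr /=; apply: ispan_add; last by apply: ispan_gen.
exact: (IH (fun i => a (widen_ord (leqnSn n) i))).
Qed.

Definition ofun {T : Type} n (x0 : T) (c : 'I_n -> T) : nat -> T :=
  fun j => match insub j with Some o => c o | None => x0 end.
Lemma ofunE {T : Type} n (x0 : T) (c : 'I_n -> T) (j : 'I_n) : ofun x0 c j = c j.
Proof. by rewrite /ofun valK. Qed.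

Lemma fgmod_span {R : comPzRingType} {M : lmodType R} (I : R -> Prop) (s : seq M) :
  is_ideal I ->
  (forall m : M, exists c : 'I_(size s) -> R, m = \sum_(i < size s) c i *: s`_i) ->
  forall m, ispan I (fun _ => True) m ->
  exists c : nat -> R, (forall j, I (c j)) /\ m = \sum_(j < size s) c j *: s`_j.
Proof.
move=> HI Hs m; elim.
- exists (fun _ => 0); split; first by move=> _; exact: (idl0 HI).
  by rewrite big1 // => j _; rewrite scale0r.
- move=> a y Ha _; have [c ->] := Hs y.
  exists (ofun 0 (fun j => a * c j)); split.
    move=> j; rewrite /ofun; case: insub => [o|]; last exact: (idl0 HI).
    exact: (idlMr _ HI Ha).
  by rewrite scaler_sumr; apply: eq_bigr => j _; rewrite ofunE scalerA.
- move=> x y _ [c1 [H1 ->]] _ [c2 [H2 ->]]; exists (fun j => c1 j + c2 j); split.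
    by move=> j; apply: (idlD HI).
  by rewrite -big_split; apply: eq_bigr => j _; rewrite scalerDl.
Qed.

Lemma part3 (R : comPzRingType) :
  forall M : lmodType R, fg_module M -> dual_property_A M.
Proof.
move=> M [s Hs] I HIfg HW; have HI := fg_ideal_is HIfg.
apply: NNPP => Hne.
have Hall : forall m : M, ispan I (fun _ => True) m.
  move=> m; apply: IM_span; apply: NNPP => Hm; apply: Hne; by exists m.
have Hc := fun i => fgmod_span HI Hs (Hall s`_i).
pose A i := proj1_sig (constructive_indefinite_description _ (Hc i)).
have HA : forall i j, I (A i j).
  by move=> i j; exact: (proj1 (proj2_sig (constructive_indefinite_description _ (Hc i))) j).
have Ht : forall i, (i < size s)%N -> s`_i = \sum_(j < size s) A i j *: s`_j.
  by move=> i _; exact: (proj2 (proj2_sig (constructive_indefinite_description _ (Hc i)))).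
have [a [Ha Hat]] := nak HI HA Ht.
have [m0 Hm0] := HW a Ha; apply: (Hm0 m0).
have [c ->] := Hs m0; rewrite scaler_sumr; apply: eq_bigr => i _.
by rewrite scalerA mulrC -scalerA Hat.
Qed.

Definition incl {R : comPzRingType} {M : lmodType R} (L1 L2 : M -> Prop) :=
  forall x, L1 x -> L2 x.
Definition imgL {R : comPzRingType} {M : lmodType R} (a : R) (L : M -> Prop) : M -> Prop :=
  fun x => exists y, L y /\ x = a *: y.
Definition good {R : comPzRingType} {M : lmodType R} (I : R -> Prop) (L : M -> Prop) :=
  exists a, I a /\ incl L (imgL a L).
Definition stable {R : comPzRingType} {M : lmodType R} (I : R -> Prop) (L : M -> Prop) :=
  forall x, L x -> ispan I L x.
Definition nilp {R : comPzRingType} {M : lmodType R} (a : R) (L : M -> Prop) :=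
  exists p, forall x, L x -> a ^+ p *: x = 0.

Section S4.
Context {R : comPzRingType} {M : lmodType R}.
Implicit Types (L K N : M -> Prop) (I : R -> Prop).

Lemma sub_span I L : is_ideal I -> is_submodule (ispan I L).
Proof.
move=> HI; split; [exact: ispan0 | exact: ispan_add |].
move=> r x; elim.
- by rewrite scaler0; exact: ispan0.
- by move=> a y Ha Ly; rewrite scalerA; apply: ispan_gen => //; apply: (idlMl _ HI).
- by move=> x1 x2 _ H1 _ H2; rewrite scalerDr; apply: ispan_add.
Qed.

Lemma span_incl I L : is_submodule L -> incl (ispan I L) L.
Proof.
case=> L0 LD LZ x; elim => //.
- by move=> a y _ Ly; apply: LZ.
- by move=> x1 x2 _ H1 _ H2; apply: LD.
Qed.

Lemma span_mono I L1 L2 : incl L1 L2 -> incl (ispan I L1) (ispan I L2).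
Proof.
move=> H x; elim; first exact: ispan0.
- by move=> a y Ha Ly; apply: ispan_gen => //; apply: H.
- by move=> x1 x2 _ H1 _ H2; apply: ispan_add.
Qed.

Lemma sub_img a L : is_submodule L -> is_submodule (imgL a L).
Proof.
case=> L0 LD LZ; split.
- by exists 0; rewrite scaler0.
- by move=> x y [x1 [H1 ->]] [y1 [H2 ->]]; exists (x1 + y1); rewrite scalerDr; split => //; apply: LD.
- move=> r x [y [Hy ->]]; exists (r *: y); split; first by apply: LZ.
  by rewrite !scalerA mulrC.
Qed.

Lemma img_incl a L : is_submodule L -> incl (imgL a L) L.
Proof. by case=> _ _ LZ x [y [Hy ->]]; apply: LZ. Qed.

Lemma imgM a b L : is_submodule L -> incl (imgL (a * b) L) (imgL a L).
Proof.
case=> _ _ LZ x [y [Hy ->]]; exists (b *: y); split; first by apply: LZ.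
by rewrite scalerA.
Qed.

Lemma stable_img I a L : is_submodule L -> stable I L -> stable I (imgL a L).
Proof.
move=> HL HS x [y [Ly ->]]; elim: (HS y Ly).
- by rewrite scaler0; exact: ispan0.
- move=> b z Hb Lz; rewrite scalerA mulrC -scalerA; apply: ispan_gen => //.
  by exists z.
- by move=> x1 x2 _ H1 _ H2; rewrite scalerDr; apply: ispan_add.
Qed.

Lemma surj_pow b (X : M -> Prop) : incl X (imgL b X) ->
  forall p x, X x -> exists y, X y /\ x = b ^+ p *: y.
Proof.
move=> H; elim=> [|p IH] x Hx; first by exists x; rewrite expr0 scale1r.
have [y [Hy ->]] := IH x Hx; have [z [Hz ->]] := H y Hy.
by exists z; split => //; rewrite scalerA -exprSr.
Qed.

Lemma zero_good I L : is_ideal I -> is_submodule L -> (forall x, L x -> x = 0) -> good I L.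
Proof.
move=> HI [L0 _ _] HZ; exists 0; split; first exact: (idl0 HI).
by move=> x /HZ ->; exists 0; rewrite scaler0.
Qed.

Lemma stable_zero I L : stable I L -> (forall a y, I a -> L y -> a *: y = 0) ->
  forall x, L x -> x = 0.
Proof.
move=> HS HZ x /HS; elim => //.
- by move=> x1 x2 _ -> _ ->; rewrite addr0.
Qed.

Lemma min_sub (F : (M -> Prop) -> Prop) : artinian_module M ->
  (forall L, F L -> is_submodule L) -> (exists L, F L) ->
  exists L, F L /\ forall L', F L' -> incl L' L -> incl L L'.
Proof.
move=> HA HF [L0 FL0]; apply: NNPP => Hno.
have step : forall X : {L | F L}, exists Y : {L | F L},
    incl (sval Y) (sval X) /\ ~ incl (sval X) (sval Y).
  move=> [X FX]; apply: NNPP => HX; apply: Hno; exists X; split => // L' FL' HL'.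
  apply: NNPP => HL; apply: HX; by exists (exist _ L' FL').
pose f X := proj1_sig (constructive_indefinite_description _ (step X)).
have Hf X : incl (sval (f X)) (sval X) /\ ~ incl (sval X) (sval (f X)).
  exact: (proj2_sig (constructive_indefinite_description _ (step X))).
pose N n := sval (iter n f (exist _ L0 FL0)).
have [k Hk] := HA N (fun n => HF _ (svalP _)) (fun n x => (Hf _).1 x).
apply: (Hf (iter k f (exist _ L0 FL0))).2 => x Hx.
by apply/(Hk k.+1 (leqnSn k)).
Qed.


Lemma stab I a L : artinian_module M -> is_ideal I -> is_submodule L -> I a ->
  ~ nilp a L ->
  exists b, I b /\ (exists k, b = a ^+ k.+1) /\ incl (imgL b L) (imgL (b * b) L)
    /\ exists x, imgL b L x /\ x <> 0.
Proof.
move=> HA HI HL Ia Hn.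
have [k Hk] := HA (fun n => imgL (a ^+ n) L) (fun n => sub_img _ HL)
  (fun n x Hx => imgM HL (eq_ind _ (fun r => imgL r L x) Hx _ (exprSr a n))).
exists (a ^+ k.+1); split.
  by rewrite exprSr; apply: (idlMl _ HI).
split; first by exists k.
split.
  move=> x Hx; rewrite -exprD.
  apply/(Hk _ _); first exact: leq_trans (leqnSn k) (leq_addr _ _).
  by apply/(Hk k.+1 (leqnSn k)).
apply: NNPP => Hz; apply: Hn; exists k.+1 => x Lx.
apply: NNPP => Hx; apply: Hz; exists (a ^+ k.+1 *: x); split => //.
by exists x.
Qed.

Lemma subB L x y : is_submodule L -> L x -> L y -> L (x - y).
Proof.
case=> _ LD LZ Hx Hy; apply: LD => //; rewrite -scaleN1r; exact: LZ.
Qed.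

Lemma art_main I : artinian_module M -> is_ideal I ->
  forall L, is_submodule L -> stable I L -> good I L.
Proof.
move=> HA HI L0 HL0 HS0; apply: NNPP => Hg0.
have [L [[HL [HS Hg]] Hmin]] :=
  min_sub (F := fun L => is_submodule L /\ stable I L /\ ~ good I L) HA
    (fun L H => H.1) (ex_intro _ L0 (conj HL0 (conj HS0 Hg0))).
have F6 : forall L', is_submodule L' -> stable I L' -> incl L' L ->
    good I L' \/ incl L L'.
  move=> L' H1 H2 H3; case: (classic (good I L')) => Hg'; [by left | right].
  exact: Hmin L' (conj H1 (conj H2 Hg')) H3.
have [a0 [Ia0 Hna0]] : exists a, I a /\ ~ nilp a L.
  apply: NNPP => Hno.
  have Hnil : forall a, I a -> nilp a L.
    by move=> a Ia; apply: NNPP => Hn; apply: Hno; exists a.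
  apply: (Hg); apply: zero_good => //; apply: (stable_zero HS) => a y Ia Ly.
  case: (F6 (imgL a L) (sub_img _ HL) (@stable_img I a L HL HS) (@img_incl a L HL)).
  - move=> [b [Ib Hb]]; have [p Hp] := Hnil b Ib.
    have [z [Hz ->]] := surj_pow Hb p (ex_intro _ y (conj Ly erefl)).
    by apply: Hp; exact: (img_incl HL Hz).
  - move=> HLa; exfalso; apply: (Hg); by exists a.
pose G X := is_submodule X /\ exists b, I b /\ (forall x, X x <-> imgL b L x)
  /\ incl (imgL b L) (imgL (b * b) L) /\ exists x, X x /\ x <> 0.
have [N [[HN [a [Ia [HNa [Ha2 [n0 [Nn0 n0ne]]]]]]] HminN]] :
    exists N, G N /\ forall N', G N' -> incl N' N -> incl N N'.
  apply: min_sub => //; first by move=> X [].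
  have [b [Ib [_ [Hb2 Hbnz]]]] := stab HA HI HL Ia0 Hna0.
  exists (imgL b L); split; first exact: sub_img.
  by exists b; do !split => //.
have minN : forall b, I b -> incl (imgL b L) (imgL (b * b) L) ->
    (exists x, imgL b L x /\ x <> 0) -> incl (imgL b L) (imgL a L) ->
    incl (imgL a L) (imgL b L).
  move=> b Ib Hb2 [x [Hx xne]] Hinc y Hy.
  apply: (HminN (imgL b L)).
  - split; first exact: sub_img.
    by exists b; do !split => //; exists x.
  - by move=> z Hz; apply/HNa; apply: Hinc.
  - by apply/HNa.
have Nn0' := (HNa n0).1 Nn0.
have Hsurj : incl (imgL a L) (imgL a (imgL a L)).
  move=> x Hx; have [z [Lz E]] := Ha2 x Hx; exists (a *: z); split.
    by exists z.
  by rewrite E scalerA.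
pose K x := L x /\ a *: x = 0.
have HK : is_submodule K.
  case: (HL) => HL00 LD LZ; split.
  - by split => //; rewrite scaler0.
  - by move=> x y [Lx Ax] [Ly Ay]; split; [apply: LD | rewrite scalerDr Ax Ay addr0].
  - by move=> r x [Lx Ax]; split; [apply: LZ | rewrite scalerA mulrC -scalerA Ax scaler0].
have dec0 : forall x, L x -> exists n k, imgL a L n /\ K k /\ x = n + k.
  move=> x Lx; have [z [Lz E]] := Ha2 (a *: x) (ex_intro _ x (conj Lx erefl)).
  exists (a *: z), (x - a *: z); split; first by exists z.
  split; last by rewrite addrC subrK.
  split; first by apply: subB => //; apply: (img_incl HL); exists z.
  by rewrite scalerBr E scalerA subrr.
pose C := fix C (n : nat) : M -> Prop := if n is n'.+1 then ispan I (C n') else K.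
have HC : forall n, is_submodule (C n).
  by case => [|n] //=; exact: sub_span.
have Cdesc : forall n, incl (C n.+1) (C n).
  by elim => [|n IH] /=; [exact: span_incl | exact: span_mono].
have CK : forall n, incl (C n) K.
  by elim => [|n IH] x Hx //; apply: IH; apply: Cdesc.
have decj : forall j x, L x -> exists n k, imgL a L n /\ C j k /\ x = n + k.
  elim=> [|j IH] x Lx; first exact: dec0.
  elim: (HS x Lx).
  - exists 0, 0; split; first by exists 0; rewrite scaler0; split => //; case: (HL).
    by split; [exact: ispan0 | rewrite addr0].
  - move=> b y Ib Ly; have [n [k [Hn [Hk ->]]]] := IH y Ly.
    exists (b *: n), (b *: k); split; first by case: (sub_img a HL) => _ _; apply.
    by split; [exact: ispan_gen | exact: scalerDr].
  - move=> x1 x2 _ [n1 [k1 [H1 [K1 ->]]]] _ [n2 [k2 [H2 [K2 ->]]]].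
    exists (n1 + n2), (k1 + k2); split; first by case: (sub_img a HL) => _ D _; apply: D.
    split; first by case: (HC j.+1) => _ D _; apply: D.
    by rewrite addrACA.
have [k0 Hk0] := HA C HC Cdesc.
pose Kinf := C k0.
have HSK : stable I Kinf.
  by move=> x Hx; exact: ((Hk0 _ (leqnSn k0) x).2 Hx).
have [c [Ic Hc]] : good I Kinf.
  case: (F6 Kinf (HC k0) HSK (fun x Hx => (CK k0 x Hx).1)) => // HLK.
  exfalso; apply: (n0ne); have [y [Ly ->]] := Nn0'; exact: (CK k0 y (HLK y Ly)).2.
have step4 : forall d, I d -> (forall x, Kinf x -> d *: x = c *: x) ->
    exists p, forall x, imgL a L x -> d ^+ p *: x = 0.
  move=> d Id Hd; case: (classic (nilp (a * d) L)) => [[p Hp]|Hnn].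
  - exists p => x Hx; have [z [Hz ->]] := surj_pow Hsurj p Hx.
    rewrite scalerA -exprMn mulrC; apply: Hp; exact: (img_incl HL Hz).
  - exfalso; apply: (Hg).
    have [b [Ib [[k Ebk] [Hb2 Hbnz]]]] := stab HA HI HL (idlMr d HI Ia) Hnn.
    have E1 : b = a * (d * (a * d) ^+ k) by rewrite Ebk exprS mulrA.
    have E2 : b = d * (a * (a * d) ^+ k) by rewrite Ebk exprS mulrA [d * a]mulrC.
    have HaN : incl (imgL a L) (imgL d L).
      move=> x Hx; have := minN _ Ib Hb2 Hbnz.
      have Hi : incl (imgL b L) (imgL a L) by rewrite E1; exact: imgM.
      move=> /(_ Hi x Hx); rewrite E2; exact: imgM.
    exists d; split => // x Lx.
    have [n [k' [Hn [Hk' ->]]]] := decj k0 x Lx.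
    have [y1 [Ly1 ->]] := HaN n Hn.
    have [z [Kz ->]] := Hc k' Hk'.
    exists (y1 + z); split; last by rewrite scalerDr (Hd z Kz).
    by case: (HL) => _ LD _; apply: LD => //; exact: (CK k0 z Kz).1.
have Hd1 : forall x, Kinf x -> (a + c) *: x = c *: x.
  by move=> x /CK [_ Ha0]; rewrite scalerDl Ha0 add0r.
have Hd2 : forall x, Kinf x -> (a + (a + c)) *: x = c *: x.
  by move=> x Hx; rewrite scalerDl Hd1 // ((CK k0 x Hx).2) add0r.
have [p1 Hp1] := step4 _ (idlD HI Ia Ic) Hd1.
have [p2 Hp2] := step4 _ (idlD HI Ia (idlD HI Ia Ic)) Hd2.
apply: (n0ne).
have [z [Hz ->]] := surj_pow Hsurj (p1 + p2) Nn0'.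
have -> : a = (a + (a + c)) + - (a + c) by rewrite addrK.
rewrite exprDn scaler_suml big1 // => i _.
rewrite -scalerMnl.
suff -> : ((a + (a + c)) ^+ (p1 + p2 - i) * (- (a + c)) ^+ i) *: z = 0 by rewrite mul0rn.
case: (leqP p1 i) => Hi.
  rewrite -(subnK Hi) exprD mulrA [(- (a + c)) ^+ p1]exprNn mulrA -scalerA.
  by rewrite [_ *: z]Hp1 // scaler0.
have Hp : (p1 + p2 - i = (p1 + p2 - i - p2) + p2)%N.
  by lia.
rewrite Hp exprD mulrAC -scalerA.
by rewrite [_ *: z]Hp2 // scaler0.
Qed.

End S4.

Lemma zorn_sets (T : Type) (P : (T -> Prop) -> Prop) :
  (forall F : (T -> Prop) -> Prop, (forall X, F X -> P X) ->
     (forall X Y, F X -> F Y -> (forall t, X t -> Y t) \/ (forall t, Y t -> X t)) ->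
     P (fun t => exists2 X, F X & X t)) ->
  exists A, P A /\ forall B, (forall t, A t -> B t) -> ~ (forall t, B t -> A t) -> ~ P B.
Proof.
move=> H.
have HZ : forall F, classical_sets.subset F P ->
    classical_sets.total_on F (@classical_sets.subset T) -> P (classical_sets.bigcup F id).
  move=> F HF Ht; exact: (H F HF Ht).
have [A [PA HA]] := classical_sets.Zorn_bigcup HZ.
exists A; split => // B H1 H2; apply: HA; split => //.
Qed.

Definition extI {R : comPzRingType} (A : R -> Prop) (a : R) : R -> Prop :=
  fun r => exists p t, A p /\ r = p + a * t.

Lemma pireg (R : comPzRingType) : krull_dim_zero R ->
  forall x : R, exists n b, x ^+ n * (1 - x * b) = 0.
Proof.
move=> Hk x; apply: NNPP => H0.
pose S (r : R) := exists n b, r = x ^+ n * (1 - x * b).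
have S0 : ~ S 0 by move=> [n [b E]]; apply: H0; exists n, b.
have SM : forall r s, S r -> S s -> S (r * s).
  move=> r s [n [b ->]] [m [c ->]]; exists (n + m)%N, (b + c - x * b * c).
  by rewrite exprD; ring.
pose P (A : R -> Prop) := (forall r, A r -> ~ S r) /\
  (forall r s, A r -> A s -> A (r + s)) /\ (forall r s, A s -> A (r * s)).
have [A [[AS [AD AM]] Amax]] : exists A, P A /\ forall B, (forall t, A t -> B t) ->
    ~ (forall t, B t -> A t) -> ~ P B.
  apply: zorn_sets => F HF Htot; split; last split.
  - by move=> r [X FX Xr]; apply: (HF X FX).1.
  - move=> r s [X FX Xr] [Y FY Ys]; case: (Htot X Y FX FY) => HXY.
      by exists Y => //; apply: (HF Y FY).2.1 => //; apply: HXY.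
    by exists X => //; apply: (HF X FX).2.1 => //; apply: HXY.
  - by move=> r s [X FX Xs]; exists X => //; apply: (HF X FX).2.2.
have A0 : A 0.
  apply: NNPP => HA0; apply: (Amax (fun r => A r \/ r = 0)).
  - by move=> t Ht; left.
  - by move=> H; apply: HA0; exact: (H 0 (or_intror erefl)).
  split; last split.
  - by move=> r /= [/AS //| ->].
  - move=> r s /= [Ar|->] [As|->]; rewrite ?addr0 ?add0r; by [left; apply: (AD) | left | left | right].
  - by move=> r s /= [As|->]; [left; apply: (AM) | right; rewrite mulr0].
have Pext : forall a, (forall r s, A r -> A s -> A (r + s)) ->
    (forall r s, A s -> A (r * s)) ->
    (forall r s, extI A a r -> extI A a s -> extI A a (r + s)) /\
    (forall r s, extI A a s -> extI A a (r * s)).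
  move=> a _ _; split.
  - move=> r s [p [t [Ap ->]]] [q [u [Aq ->]]]; exists (p + q), (t + u); split.
      exact: AD.
    by ring.
  - move=> r s [p [t [Ap ->]]]; exists (r * p), (r * t); split; first exact: AM.
    by ring.
have Aext : forall a, (forall t, A t -> extI A a t).
  by move=> a t At; exists t, 0; split => //; rewrite mulr0 addr0.
have meet : forall a, ~ A a -> exists r, extI A a r /\ S r.
  move=> a Na; apply: NNPP => Hn; apply: (Amax (extI A a) (Aext a)).
  - by move=> H; apply: Na; apply: H; exists 0, 1; split => //; rewrite add0r mulr1.
  split; last exact: (Pext a AD AM).
  by move=> r Er Sr; apply: Hn; exists r.
have Hid : is_ideal A by split => //.
have Hprime : prime_ideal A.
  split => //.
    by move=> A1; apply: (AS 1 A1); exists 0%N, 0; rewrite mulr0 subr0 expr0 mulr1.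
  move=> a b Aab; apply: NNPP => Hn.
  have Na : ~ A a by move=> H; apply: Hn; left.
  have Nb : ~ A b by move=> H; apply: Hn; right.
  have [r1 [[p1 [t1 [Ap1 E1]]] S1]] := meet a Na.
  have [r2 [[p2 [t2 [Ap2 E2]]] S2]] := meet b Nb.
  apply: (AS (r1 * r2)); last exact: SM.
  have -> : r1 * r2 = r2 * p1 + (t1 * a * p2 + (t1 * t2) * (a * b)).
    by rewrite E1 E2; ring.
  apply: (AD); first exact: (AM _ _ Ap1).
  by apply: (AD); [exact: (AM _ _ Ap2) | exact: (AM _ _ Aab)].
have [_ _ Hmax] := Hk A Hprime.
have [Pe1 Pe2] := Pext x AD AM.
have HJ : is_ideal (extI A x).
  split; [by exists 0, 0; split => //; rewrite mulr0 addr0 | exact: Pe1 | exact: Pe2].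
case: (Hmax _ HJ (Aext x)) => [HJA|[p [t [Ap E]]]].
  apply: (AS x); first by apply: HJA; exists 0, 1; split => //; rewrite mulr1 add0r.
  by exists 1%N, 0; rewrite mulr0 subr0 mulr1 expr1.
apply: (AS p Ap); exists 0%N, t; rewrite expr0 mul1r.
by rewrite E addrK.
Qed.

Lemma pi_idem (R : comPzRingType) (x : R) : (exists n b, x ^+ n * (1 - x * b) = 0) ->
  exists e y k, e * e = e /\ x * y = e /\ x ^+ k * (1 - e) = 0.
Proof.
move=> [n [b H]].
have H1 : x ^+ n * (x * b) = x ^+ n.
  by apply/eqP; rewrite -subr_eq0 -(oppr0) -H; apply/eqP; ring.
have Hj : forall j, x ^+ n.+1 * (x * b) ^+ j = x ^+ n.+1.
  elim=> [|j IH]; first by rewrite expr0 mulr1.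
  have H1' : x ^+ n.+1 * (x * b) = x ^+ n.+1.
    by rewrite exprS -mulrA H1.
  by rewrite [(x * b) ^+ j.+1]exprSr mulrA IH H1'.
exists ((x * b) ^+ n.+1), (b * (x * b) ^+ n), n.+1; split; last split.
- rewrite {1}exprMn -mulrA [b ^+ _ * _]mulrC mulrA Hj.
  by rewrite exprMn.
- by rewrite mulrA -exprS.
- by rewrite mulrBr mulr1 Hj subrr.
Qed.

Lemma build (R : comPzRingType) (I : R -> Prop) : is_ideal I ->
  (forall x : R, exists e y k, e * e = e /\ x * y = e /\ x ^+ k * (1 - e) = 0) ->
  forall s : seq R, (forall i, (i < size s)%N -> I s`_i) ->
  exists c d h, [/\ I c, h * h = h, c * h = 0 /\ d * h = 0, c * d = 1 - h &
    forall i, (i < size s)%N -> exists k, h * s`_i ^+ k = 0].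
Proof.
move=> HI Hpi; elim=> [|a s IH] Hs.
  exists 0, 0, 1; split.
  exact: (idl0 HI). by rewrite mulr1. by rewrite !mul0r. by rewrite mul0r subrr. by [].
have [c [d [h [Ic Hhh [Hch Hdh] Hcd Hk]]]] := IH (fun i Hi => Hs i.+1 Hi).
have [e [y [k [Hee [Hay Hak]]]]] := Hpi a.
have E1e : (1 - e) * (1 - e) = 1 - e.
  by rewrite mulrBl mul1r mulrBr mulr1 Hee subrr subr0.
have Ee1 : e * (1 - e) = 0 by rewrite mulrBr mulr1 Hee subrr.
exists (c + a * (h * e)), (d + y * (h * e)), (h * (1 - e)); split.
- apply: (idlD HI Ic); apply: (idlMr _ HI); exact: (Hs 0%N).
- have -> : h * (1 - e) * (h * (1 - e)) = (h * h) * ((1 - e) * (1 - e)) by ring.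
  by rewrite Hhh E1e.
- split.
  have -> : (c + a * (h * e)) * (h * (1 - e)) = (c * h) * (1 - e) + a * (h * h) * (e * (1 - e)) by ring.
    by rewrite Hch Ee1 !mul0r mulr0 addr0.
  have -> : (d + y * (h * e)) * (h * (1 - e)) = (d * h) * (1 - e) + y * (h * h) * (e * (1 - e)) by ring.
    by rewrite Hdh Ee1 !mul0r mulr0 addr0.
- have -> : (c + a * (h * e)) * (d + y * (h * e)) =
     c * d + (c * h) * (y * e) + (d * h) * (a * e) + (h * h) * (((a * y) * e) * e) by ring.
  by rewrite Hcd Hch Hdh Hay Hhh !Hee !mul0r !addr0; ring.
- move=> [|i] Hi.
    exists k; rewrite /=. have -> : h * (1 - e) * a ^+ k = h * (a ^+ k * (1 - e)) by ring.
    by rewrite Hak mulr0.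
  have [k' Hk'] := Hk i Hi; exists k' => /=.
  by rewrite mulrAC Hk' mul0r.
Qed.

Lemma expo (R : comPzRingType) (s : seq R) (T : R -> Prop) :
  (forall r x, T r -> T (r * x)) ->
  (forall r, (forall j, (j < size s)%N -> T (r * s`_j)) -> T r) ->
  forall N (p : nat -> nat), (\sum_(i < size s) p i <= N)%N ->
  forall r, (forall i, (i < size s)%N -> T (r * s`_i ^+ p i)) -> T r.
Proof.
move=> TM TK; elim=> [|N IH] p Hsum r Hr; apply: TK => j Hj;
  case E: (p j) => [|q].
- by move: (Hr j Hj); rewrite E expr0 mulr1 => /TM; apply.
- exfalso; move: Hsum; rewrite (bigD1 (Ordinal Hj)) //= E.
  by rewrite leqn0 addn_eq0.
- by move: (Hr j Hj); rewrite E expr0 mulr1 => /TM; apply.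
pose p' i := if i == j then q else p i.
apply: (IH p').
  move: Hsum; rewrite (bigD1 (Ordinal Hj)) //= E addSn ltnS => Hsum.
  rewrite (bigD1 (Ordinal Hj)) //= /p' eqxx; apply: leq_trans Hsum.
  rewrite leq_add2l; apply: eq_leq; apply: eq_bigr => i Hi; case: eqP => // Eij; exfalso; move: Hi.
  by rewrite -val_eqE /= Eij eqxx.
move=> i Hi; rewrite /p'; case: eqP => [->|Hij].
  by move: (Hr j Hj); rewrite E exprS mulrA [_ * s`_j]mulrC.
by move: (TM _ s`_j (Hr i Hi)); rewrite mulrAC.
Qed.

Lemma fgideal_span {R : comPzRingType} {M : lmodType R} (I : R -> Prop) (s : seq R) :
  (forall x, I x <-> exists c : 'I_(size s) -> R, x = \sum_(i < size s) c i * s`_i) ->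
  forall m : M, ispan I (fun _ => True) m ->
  exists y : 'I_(size s) -> M, m = \sum_(i < size s) s`_i *: y i.
Proof.
move=> Hs m; elim.
- by exists (fun _ => 0); rewrite big1 // => i _; rewrite scaler0.
- move=> a y0 /Hs [c ->] _; exists (fun i => c i *: y0).
  by rewrite scaler_suml; apply: eq_bigr => i _; rewrite scalerA mulrC.
- move=> x y _ [y1 ->] _ [y2 ->]; exists (fun i => y1 i + y2 i).
  by rewrite -big_split; apply: eq_bigr => i _; rewrite scalerDr.
Qed.

Lemma part2 (R : comPzRingType) :
  krull_dim_zero R -> forall M : lmodType R, dual_property_A M.
Proof.
move=> Hk M I HIfg HW; have HI := fg_ideal_is HIfg.
have [s Hs] := HIfg.
apply: NNPP => Hne.
have Hall : forall m : M, ispan I (fun _ => True) m.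
  move=> m; apply: IM_span; apply: NNPP => Hm; apply: Hne; by exists m.
have Hpi : forall x : R, exists e y k, e * e = e /\ x * y = e /\ x ^+ k * (1 - e) = 0.
  by move=> x; apply: pi_idem; apply: pireg.
have Hsi : forall i, (i < size s)%N -> I s`_i.
  move=> i Hi; apply/Hs; exists (fun j => if val j == i then 1 else 0).
  rewrite (bigD1 (Ordinal Hi)) //= eqxx mul1r big1 ?addr0 // => j Hj.
  case: eqP => [Eji|]; last by rewrite mul0r.
  by exfalso; move: Hj; rewrite -val_eqE /= Eji eqxx.
have [c [d [h [Ic Hhh [Hch Hdh] Hcd Hk']]]] := build HI Hpi Hsi.
pose T (r : R) := forall m : M, r *: m = 0.
have TM : forall r x, T r -> T (r * x).
  by move=> r x Tr m; rewrite mulrC -scalerA Tr scaler0.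
have TK : forall r, (forall j, (j < size s)%N -> T (r * s`_j)) -> T r.
  move=> r Hr m; have [y ->] := fgideal_span Hs (Hall m).
  rewrite scaler_sumr big1 // => i _; rewrite scalerA; exact: Hr.
have Hk2 : forall i, exists k, (i < size s)%N -> h * s`_i ^+ k = 0.
  move=> i; case: (ltnP i (size s)) => Hi.
    by have [k Hk0] := Hk' i Hi; exists k.
  by exists 0%N.
pose p i := proj1_sig (constructive_indefinite_description _ (Hk2 i)).
have Th : T h.
  apply: (@expo R s T TM TK _ p (leqnn _)) => i Hi.
  have := proj2_sig (constructive_indefinite_description _ (Hk2 i)) Hi.
  by rewrite -/(p i) => -> m; rewrite scale0r.
have [m0 Hm0] := HW c Ic; apply: (Hm0 (d *: m0)).
by rewrite scalerA Hcd scalerBl scale1r Th subr0.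
Qed.


Lemma part4 (R : comPzRingType) (M : lmodType R) : artinian_module M ->
  (forall I : R -> Prop, is_ideal I -> (forall r, I r -> @W R M r) -> @IM_ne_M R M I)
  /\ dual_property_A M.
Proof.
move=> HA.
have H1 : forall I : R -> Prop, is_ideal I -> (forall r, I r -> @W R M r) -> @IM_ne_M R M I.
  move=> I HI HW; apply: NNPP => Hne.
  have Hall : forall m : M, ispan I (fun _ => True) m.
    move=> m; apply: IM_span; apply: NNPP => Hm; apply: Hne; by exists m.
  have Hsub : is_submodule (fun _ : M => True) by split.
  have [a [Ia Ha]] := art_main HA HI Hsub (fun x _ => Hall x).
  have [m0 Hm0] := HW a Ia; have [y [_ E]] := Ha m0 Logic.I; exact: Hm0 y E.
split => //; move=> I Hfg; exact: H1 _ (fg_ideal_is Hfg).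
Qed.

Theorem theorem2p12 (R : comPzRingType) :
  (bezout_ring R -> forall M : lmodType R, dual_property_A M) /\
  (krull_dim_zero R -> forall M : lmodType R, dual_property_A M) /\
  (forall M : lmodType R, fg_module M -> dual_property_A M) /\
  (forall M : lmodType R, artinian_module M ->
     (forall I : R -> Prop, is_ideal I -> (forall r, I r -> @W R M r) -> @IM_ne_M R M I)
     /\ dual_property_A M).
Proof.
split; first exact: part1.
split; first exact: part2.
split; first exact: part3.
exact: part4.
Qed.
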